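(* If $G$ is a finitely generated profinite group and $H<G$ is a subgroup of finite index, then every epimorphism $\alpha: G\to H$ has finite kernel; in particular, if $G$ has no non-trivial finite normal subgroup then $\alpha$ is injective.
   Context: Finitely generated means topologically finitely generated. Epimorphism means a surjective (continuous) homomorphism. *)

(* Defs.v *)
From HB Require Import structures.
From mathcomp Require Import all_boot all_order all_algebra.
From mathcomp Require Import all_classical all_reals all_analysis.
Set Implicit Arguments. Unset Strict Implicit. Unset Printing Implicit Defensive.
Local Open Scope classical_set_scope.

Section TopGroupDefs.
Variable G : topologicalType.
Variables (mul : G -> G -> G) (inv : G -> G) (one : G).

Definition is_group : Prop :=
  [/\ forall x y z, mul x (mul y z) = mul (mul x y) z,
      forall x, mul one x = x, forall x, mul x one = x,
      forall x, mul (inv x) x = one & forall x, mul x (inv x) = one].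

Definition is_topological_group : Prop :=
  [/\ is_group,
      continuous (fun p : G * G => mul p.1 p.2) & continuous inv].

Definition is_profinite_group : Prop :=
  [/\ is_topological_group, compact [set: G], hausdorff_space G
    & totally_disconnected [set: G]].

Definition is_subgroup (H : set G) : Prop :=
  [/\ H one, forall x y, H x -> H y -> H (mul x y) & forall x, H x -> H (inv x)].

Definition is_normal_subgroup (N : set G) : Prop :=
  is_subgroup N /\ forall g x, N x -> N (mul (mul g x) (inv g)).

Definition generated_subgroup (S : set G) : set G :=
  \bigcap_(K in [set K | is_subgroup K /\ S `<=` K]) K.

Definition topologically_finitely_generated : Prop :=
  exists S : set G, finite_set S /\ closure (generated_subgroup S) = [set: G].

Definition lcoset (g : G) (H : set G) : set G := [set mul g h | h in H].

Definition finite_index (H : set G) : Prop :=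
  finite_set [set lcoset g H | g in [set: G]].

Definition is_hom (f : G -> G) : Prop := forall x y, f (mul x y) = mul (f x) (f y).

(* epimorphism G -> H: continuous surjective homomorphism onto H (as a map into
   G with image exactly H; continuity into the subspace H is the same as
   continuity into G for a map with values in H) *)
Definition is_epimorphism_onto (f : G -> G) (H : set G) : Prop :=
  [/\ is_hom f, continuous f & f @` [set: G] = H].

Definition hom_kernel (f : G -> G) : set G := [set x | f x = one].

Definition no_nontrivial_finite_normal_subgroup : Prop :=
  forall N : set G, is_normal_subgroup N -> finite_set N -> N = [set one].

End TopGroupDefs.

(* Main.v *)
Require Import Defs.
From HB Require Import structures.
From mathcomp Require Import all_boot all_order all_algebra.
From mathcomp Require Import all_classical all_reals all_analysis.
From mathcomp Require Import Rstruct.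
Set Implicit Arguments. Unset Strict Implicit. Unset Printing Implicit Defensive.

Lemma count_contra (q d : nat) (F : 'I_q -> 'I_q) (comb : 'I_d -> 'I_q -> 'I_q) :
  (forall i, exists t a, i = comb t (F a)) ->
  (forall a, exists e : 'I_d.+1 -> 'I_q, injective e /\ forall l, F (e l) = F a) ->
  q = 0.
Proof.
move=> surj fib.
pose Im := [set F a | a in 'I_q].
have h1 : #|[set: 'I_q]| <= d * #|Im|.
  have sub : [set: 'I_q] \subset [set comb p.1 p.2 | p in finset.setX [set: 'I_d] Im].
    apply/fintype.subsetP => i _; have [t [a ->]] := surj i.
    apply/finset.imsetP; exists (t, F a) => //.
    by rewrite finset.in_setX finset.in_setT /=; apply/finset.imsetP; exists a.
  apply: (leq_trans (fintype.subset_leq_card sub)).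
  by apply: (leq_trans (finset.leq_imset_card _ _)); rewrite finset.cardsX finset.cardsT card_ord.
have h2 : #|Im| * d.+1 <= \sum_(i < q) 1.
  rewrite (partition_big F (mem Im)) /=; last by move=> i _; apply/finset.imsetP; exists i.
  rewrite -sum_nat_const; apply: leq_sum => j /finset.imsetP [a _ ->].
  rewrite sum1_card.
  have [e [ie fe]] := fib a.
  have -> : d.+1 = #|[set e l | l in 'I_d.+1]| by rewrite finset.card_imset // card_ord.
  apply: fintype.subset_leq_card; apply/fintype.subsetP => i /finset.imsetP [l _ ->].
  by rewrite unfold_in /= fe; exact: eqxx.
rewrite finset.cardsT card_ord in h1; rewrite sum1_card card_ord in h2.
have [//|qpos] := posnP q.
have : 0 < #|Im| by apply/fintype.card_gt0P; exists (F (Ordinal qpos)); apply/finset.imsetP; exists (Ordinal qpos).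
rewrite mulnC in h2.
move: (leq_trans h2 h1); rewrite leq_mul2r; case/orP.
  by move/eqP => ->.
by rewrite ltnn.
Qed.

Local Open Scope classical_set_scope.

Section Grp.
Variable G : topologicalType.
Variables (mul : G -> G -> G) (inv : G -> G) (one : G).
Hypothesis TG : is_topological_group mul inv one.

Local Notation "x ** y" := (mul x y) (at level 40, left associativity).

Lemma gA x y z : x ** (y ** z) = x ** y ** z.
Proof. by case: TG => -[]. Qed.
Lemma g1m x : one ** x = x.
Proof. by case: TG => -[]. Qed.
Lemma gm1 x : x ** one = x.
Proof. by case: TG => -[]. Qed.
Lemma gVm x : inv x ** x = one.
Proof. by case: TG => -[]. Qed.
Lemma gmV x : x ** inv x = one.
Proof. by case: TG => -[]. Qed.
Lemma gKV x y : inv x ** (x ** y) = y.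
Proof. by rewrite gA gVm g1m. Qed.
Lemma gVK x y : x ** (inv x ** y) = y.
Proof. by rewrite gA gmV g1m. Qed.
Lemma gmK x y : x ** y ** inv y = x.
Proof. by rewrite -gA gmV gm1. Qed.
Lemma gmVK x y : x ** inv y ** y = x.
Proof. by rewrite -gA gVm gm1. Qed.
Lemma gcanl x y z : x ** y = x ** z -> y = z.
Proof. by move=> e; rewrite -(gKV x y) e gKV. Qed.
Lemma gcanr x y z : y ** x = z ** x -> y = z.
Proof. by move=> e; rewrite -(gmK y x) e gmK. Qed.
Lemma ginvK x : inv (inv x) = x.
Proof. by apply: (@gcanl (inv x)); rewrite gVm gmV. Qed.
Lemma ginvM x y : inv (x ** y) = inv y ** inv x.
Proof. by apply: (@gcanl (x ** y)); rewrite gmV -gA gVK gmV. Qed.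
Lemma ginv1 : inv one = one.
Proof. by rewrite -{2}(gVm one) gm1. Qed.
Lemma ginv_uniq x y : x ** y = one -> y = inv x.
Proof. by move=> e; apply: (@gcanl x); rewrite e gmV. Qed.

Lemma cont_mul2 (X : topologicalType) (f g : X -> G) x :
  {for x, continuous f} -> {for x, continuous g} ->
  {for x, continuous (fun y => f y ** g y)}.
Proof.
move=> cf cg.
have cp : {for x, continuous (fun y => (f y, g y))}.
  by apply: cvg_pair.
have := @continuous_comp _ _ _ (fun y => (f y, g y)) (fun p : G * G => p.1 ** p.2) x cp.
by case: TG => _ cm _; apply; apply: cm.
Qed.

Lemma cont_inv (X : topologicalType) (f : X -> G) x :
  {for x, continuous f} -> {for x, continuous (fun y => inv (f y))}.
Proof.
move=> cf; have := @continuous_comp _ _ _ f inv x cf.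
by case: TG => _ _ ci; apply; apply: ci.
Qed.

Lemma cont_id x : {for x, continuous (@id G)}.
Proof. by move=> A; rewrite nbhs_simpl. Qed.

Lemma cont_cst (X : topologicalType) (c : G) x : {for x, continuous (fun _ : X => c)}.
Proof. exact: cst_continuous. Qed.

End Grp.


Section Top.
Variable G : topologicalType.
Variables (mul : G -> G -> G) (inv : G -> G) (one : G).
Hypothesis TG : is_topological_group mul inv one.
Hypothesis cG : compact [set: G].

Local Notation "x ** y" := (mul x y) (at level 40, left associativity).

Lemma cont_fst (p : G * G) : {for p, continuous fst}.
Proof. exact: cvg_fst. Qed.
Lemma cont_snd (p : G * G) : {for p, continuous snd}.
Proof. exact: cvg_snd. Qed.

Lemma open_pre_lmul (V : set G) a : open V -> open [set z | V (a ** z)].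
Proof.
move=> oV; apply: (@open_comp _ _ (fun z => a ** z) V) => // z _.
exact: (cont_mul2 TG (@cont_cst G G a z) (@cont_id G z)).
Qed.

Lemma subgroup_open_closed (V : set G) :
  is_subgroup mul inv one V -> open V -> closed V.
Proof.
move=> [V1 VM VI] oV; rewrite -[V]setCK; apply: open_closedC.
rewrite openE => y nVy.
have o : open [set z | V (inv y ** z)] by exact: open_pre_lmul.
have : nbhs y [set z | V (inv y ** z)].
  by apply: open_nbhs_nbhs; split => //=; rewrite (gVm TG).
apply: filterS => z /= Vz Vz'; apply: nVy.
have := VM _ _ Vz' (VI _ Vz); rewrite (ginvM TG) (ginvK TG) (gVK TG) //.
Qed.

Lemma subgroup_nbhs_open (W : set G) :
  is_subgroup mul inv one W -> nbhs one W -> open W.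
Proof.
move=> [W1 WM WI] nW; rewrite openE => x Wx.
have c : {for x, continuous (fun z => inv x ** z)}.
  exact: (cont_mul2 TG (@cont_cst G G (inv x) x) (@cont_id G x)).
have : nbhs x [set z | W (inv x ** z)].
  by apply: c; rewrite /= (gVm TG).
apply: filterS => z /= Wz.
by have := WM _ _ Wx Wz; rewrite (gVK TG).
Qed.

Lemma tube (K : set G) (P : G -> G -> Prop) : compact K ->
  (forall u, K u -> \forall u' \near u & g \near one, P g u') ->
  \forall g \near one, forall u, K u -> P g u.
Proof.
move=> /compact_near_coveringP cK h.
have H := @cK G (nbhs one) P (@nbhs_filter G one) h.
by apply: (filterS _ H) => g Pg u Ku; exact: Pg.
Qed.

Lemma compact_closed_sub (K : set G) : closed K -> compact K.
Proof. by move=> cK; apply: (subclosed_compact cK cG). Qed.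

Lemma tube_clopen (C : set G) : open C -> closed C ->
  \forall g \near one, forall u, C u -> C (u ** g).
Proof.
move=> oC clC; apply: (tube (P := fun g u => C (u ** g))).
  exact: compact_closed_sub.
move=> u Cu.
have c : {for (u, one), continuous (fun p : G * G => p.1 ** p.2)}.
  by apply: (cont_mul2 TG (f := fst) (g := snd)); [exact: cont_fst | exact: cont_snd].
have : nbhs (u, one) [set p : G * G | C (p.1 ** p.2)].
  apply: c; rewrite /= (gm1 TG); exact: open_nbhs_nbhs.
by [].
Qed.

Lemma open_subgroup_in_clopen (U : set G) : open U -> closed U -> U one ->
  exists W, [/\ is_subgroup mul inv one W, open W & W `<=` U].
Proof.
move=> oU clU U1.
pose W := [set g | forall u, U u <-> U (u ** g)].
have sW : is_subgroup mul inv one W.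
  split.
  - by move=> u; rewrite (gm1 TG).
  - by move=> x y Wx Wy u; rewrite (Wx u) (Wy (u ** x)) (gA TG).
  - move=> x Wx u; rewrite (Wx (u ** inv x)) (gmVK TG); tauto.
exists W; split => //; last by move=> g /(_ one) /=; rewrite (g1m TG) => -[+ _]; apply.
apply: subgroup_nbhs_open => //.
have h1 := tube_clopen oU clU.
have h2 := tube_clopen (closed_openC clU) (open_closedC oU).
near=> g => u; split => Hu.
  exact: (near h1 g).
apply: contrapT => nU; have h3 := near h2 g; by apply: (h3 _ u nU Hu).
Unshelve. all: by end_near. Qed.

Lemma normal_core (V : set G) : is_subgroup mul inv one V -> open V ->
  exists N, [/\ is_normal_subgroup mul inv one N, open N & N `<=` V].
Proof.
move=> [V1 VM VI] oV.
pose N := [set g | forall x, V (x ** g ** inv x)].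
have sN : is_subgroup mul inv one N.
  split.
  - by move=> x /=; rewrite (gm1 TG) (gmV TG).
  - move=> a b Na Nb x; have := VM _ _ (Na x) (Nb x).
    by rewrite -!(gA TG) (gKV TG).
  - move=> a Na x; have := VI _ (Na x).
    by rewrite !(ginvM TG) (ginvK TG) (gA TG).
exists N; split.
- split => // g x Nx y.
  by have := Nx (y ** g); rewrite (ginvM TG) !(gA TG).
- apply: subgroup_nbhs_open => //.
  have T := @tube setT (fun g x => V (x ** g ** inv x)) cG.
  apply: (filterS _ (T _)); first by move=> g Hg x; exact: Hg.
  move=> u _.
  have c : {for (u, one), continuous (fun p : G * G => p.1 ** p.2 ** inv p.1)}.
    apply: (cont_mul2 TG (f := fun p : G * G => p.1 ** p.2) (g := fun p : G * G => inv p.1)).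
      by apply: (cont_mul2 TG (f := fst) (g := snd)); [exact: cont_fst | exact: cont_snd].
    by apply: (cont_inv TG (f := fst)); exact: cont_fst.
  have : nbhs (u, one) [set p : G * G | V (p.1 ** p.2 ** inv p.1)].
    apply: c; rewrite /= (gm1 TG) (gmV TG); exact: open_nbhs_nbhs.
  by [].
- by move=> g /(_ one); rewrite (g1m TG) (ginv1 TG) (gm1 TG).
Qed.

End Top.


Section ZD.
Variable T : topologicalType.
Hypothesis cT : compact [set: T].
Hypothesis hT : hausdorff_space T.
Hypothesis tdT : totally_disconnected [set: T].
Variable p : T.

Let Cq := \bigcap_(D in [set D : set T | clopen D /\ D p]) D.

Let Cq_closed : closed Cq.
Proof. by apply: closed_bigI => D [[_ ?] _]. Qed.

Let Cq_p : Cq p.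
Proof. by move=> D [_ ?]. Qed.

Let step1 (W : set T) : open W -> Cq `<=` W ->
  exists D, [/\ clopen D, D p & D `<=` W].
Proof.
move=> oW CW.
have cK : compact (~` W) by apply: (subclosed_compact (open_closedC oW) cT).
move/compact_near_coveringP : cK => cK.
pose F := filter_from [set D : set T | clopen D /\ D p] (fun D => [set E : set T | E `<=` D]).
have FF : Filter F.
  apply: filter_from_filter; first by exists setT; split => //; exact: clopenT.
  move=> A B [cA Ap] [cB Bp]; exists (A `&` B); first by split => //; exact: clopenI.
  by move=> E EAB; split => x /EAB [].
have := cK (set T) F (fun E x => ~ E x) FF.
case.
- move=> x nWx.
  have [D [cD Dp nDx]] : exists D, [/\ clopen D, D p & ~ D x].
    apply: contrapT => hn; apply: nWx; apply: CW => D [cD Dp].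
    by apply: contrapT => nD; apply: hn; exists D.
  exists (~` D, [set E : set T | E `<=` D]); first split.
  + apply: open_nbhs_nbhs; split => //; apply: closed_openC; by case: cD.
  + by exists D.
  + by case=> y E [/= nDy ED] Ey; apply: nDy; apply: ED.
- move=> D [cD Dp] HD; exists D; split => // y Dy.
  apply: contrapT => nWy.
  by have := HD D (fun z h => h) y nWy.
Qed.

Let Cq_sub (B Op F0 : set T) : open Op -> closed F0 -> B = Cq `&` Op -> B = Cq `&` F0 ->
  B p -> B = Cq.
Proof.
move=> oO cF BO BF Bp.
have cB : closed B by rewrite BF; exact: closedI.
have cQ : closed (Cq `&` ~` Op) by apply: closedI => //; exact: open_closedC.
have dis : B `&` (Cq `&` ~` Op) = set0.
  by rewrite BO; apply/seteqP; split => x // [[_ Ox] [_ nOpx]].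
have [U [V [oU oV BU QV UV]]] :=
  (proj1 (@normal_openP Rdefinitions.R T) (compact_normal hT cT)) _ _ cB cQ dis.
have CUV : Cq `<=` U `|` V.
  move=> y Cy; have [Oy|nOy] := pselect (Op y).
  + by left; apply: BU; rewrite BO.
  + by right; apply: QV.
have [D [[oD clD] Dp DUV]] := step1 (openU oU oV) CUV.
have cD' : clopen (D `&` U).
  split; first exact: openI.
  have -> : D `&` U = D `&` ~` V.
    apply/seteqP; split => x [Dx Ux]; split => //.
      by move=> Vx; have : (U `&` V) x by []; rewrite UV.
    by case: (DUV x Dx).
  by apply: closedI => //; exact: open_closedC.
have CU : Cq `<=` U.
  move=> y Cy; have := Cy _ (conj cD' (conj Dp (BU p Bp))); by case.
apply/seteqP; split; first by rewrite BO => x [].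
move=> y Cy; rewrite BO; split => //.
apply: contrapT => nOy.
have Vy : V y by apply: QV.
have : (U `&` V) y by split => //; exact: CU.
by rewrite UV.
Qed.

Let Cq_connected : connected Cq.
Proof.
move=> B [b Bb] [Op oO BO] [F0 cF BF].
have [Bp|nBp] := pselect (B p); first exact: (Cq_sub oO cF BO BF).
have e : Cq `&` ~` F0 = Cq.
  apply: (@Cq_sub _ (~` F0) (~` Op)).
  - exact: closed_openC.
  - exact: open_closedC.
  - by [].
  - rewrite eqEsubset; split => x [Cx nx]; split => // Ox; apply: nx.
      have : B x by rewrite BO.
      by rewrite BF => -[].
    have : B x by rewrite BF.
    by rewrite BO => -[].
  - split => // Fp; apply: nBp; by rewrite BF.
exfalso; have : B b by [].
rewrite BF => -[Cb Fb].
have : (Cq `&` ~` F0) b by rewrite e.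
by case.
Qed.

Lemma zero_dim_pt x : x <> p -> exists U : set T, [/\ open U, closed U, U p & ~ U x].
Proof.
move=> xp; apply: contrapT => hn.
have Cx : Cq x.
  move=> D [[oD cD] Dp]; apply: contrapT => nDx; apply: hn; exists D; split => //.
have : connected_component [set: T] p x.
  exact: (connected_component_max Cq_p (fun _ _ => I) Cq_connected Cx).
by rewrite (tdT (I : [set: T] p)) => e; exact: xp e.
Qed.

End ZD.


Section Sep.
Variable G : topologicalType.
Variables (mul : G -> G -> G) (inv : G -> G) (one : G).
Hypothesis TG : is_topological_group mul inv one.
Hypothesis cG : compact [set: G].
Hypothesis hG : hausdorff_space G.
Hypothesis tdG : totally_disconnected [set: G].

Local Notation "x ** y" := (mul x y) (at level 40, left associativity).

Lemma sep1 x : x <> one ->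
  exists N, [/\ is_normal_subgroup mul inv one N, open N & ~ N x].
Proof.
move=> x1; have [U [oU cU U1 nUx]] := zero_dim_pt cG hG tdG x1.
have [W [sW oW WU]] := open_subgroup_in_clopen TG cG oU cU U1.
have [N [nN oN NW]] := normal_core TG cG sW oW.
by exists N; split => // /NW /WU.
Qed.

Lemma normalI (N1 N2 : set G) : is_normal_subgroup mul inv one N1 ->
  is_normal_subgroup mul inv one N2 -> is_normal_subgroup mul inv one (N1 `&` N2).
Proof.
move=> [[a1 b1 c1] d1] [[a2 b2 c2] d2]; split; first split.
- by split.
- by move=> x y [? ?] [? ?]; split; [apply: b1|apply: b2].
- by move=> x [? ?]; split; [apply: c1|apply: c2].
- by move=> g x [? ?]; split; [apply: d1|apply: d2].
Qed.

Lemma normalT : is_normal_subgroup mul inv one setT.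
Proof. by []. Qed.

Lemma sep_list (xs : seq G) : (forall x, x \in xs -> x <> one) ->
  exists N, [/\ is_normal_subgroup mul inv one N, open N & forall x, x \in xs -> ~ N x].
Proof.
elim: xs => [|a xs IH] h.
  by exists setT; split; [exact: normalT | exact: openT | ].
have [N1 [n1 o1 h1]] := IH (fun x hx => h x (@mem_behead _ (a :: xs) x hx)).
have [N2 [n2 o2 h2]] := sep1 (h a (mem_head _ _)).
exists (N1 `&` N2); split.
- exact: normalI.
- exact: openI.
move=> x; rewrite in_cons => /orP [/eqP -> [_ //]|/h1 nx [] //].
Qed.

Lemma cover_list (V : set G) : is_subgroup mul inv one V -> open V ->
  exists cs : seq G, forall x, exists2 c, c \in cs & V (inv c ** x).
Proof.
move=> sV oV.
move/compact_near_coveringP : cG => cK.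
pose F := filter_from [set: seq G] (fun D : seq G => [set L : seq G | {subset D <= L}]).
have FF : Filter F.
  apply: filter_from_filter; first by exists [::].
  move=> A B _ _; exists (A ++ B) => // L hL; split => z hz; apply: hL;
    by rewrite mem_cat hz ?orbT.
have := cK (seq G) F (fun L x => exists2 c, c \in L & V (inv c ** x)) FF.
case.
- move=> x _.
  exists ([set z | V (inv x ** z)], [set L : seq G | {subset [:: x] <= L}]); first split.
  + apply: open_nbhs_nbhs; split; first exact: (open_pre_lmul TG _ oV).
    by rewrite /= (gVm TG); case: sV.
  + by exists [:: x].
  + case=> y L [/= Vy hL]; exists x => //; apply: hL; exact: mem_head.
- move=> D _ HD; exists D => x; exact: (HD D (fun z h => h) x I).
Qed.

End Sep.

Section Transv.
Variable G : topologicalType.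
Variables (mul : G -> G -> G) (inv : G -> G) (one : G).
Hypothesis TG : is_topological_group mul inv one.
Local Notation "x ** y" := (mul x y) (at level 40, left associativity).
Variable V : set G.
Hypothesis sV : is_subgroup mul inv one V.

Let eqv x y := V (inv x ** y).

Lemma eqv_refl x : eqv x x.
Proof. by rewrite /eqv (gVm TG); case: sV. Qed.
Lemma eqv_sym x y : eqv x y -> eqv y x.
Proof.
case: sV => _ _ VI; rewrite /eqv => /VI.
by rewrite (ginvM TG) (ginvK TG).
Qed.
Lemma eqv_trans x y z : eqv x y -> eqv y z -> eqv x z.
Proof.
case: sV => _ VM _; rewrite /eqv => h1 h2; have := VM _ _ h1 h2.
by rewrite -(gA TG) (gVK TG).
Qed.

Lemma transversal_seq (l : seq G) : exists t : seq G,
  (forall c, c \in l -> exists2 t', t' \in t & eqv t' c) /\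
  pairwise (fun a b => ~~ `[< eqv a b >]) t.
Proof.
elim: l => [|a l [t [ht pt]]]; first by exists [::].
have [[t' t't e]|ne] := pselect (exists2 t', t' \in t & eqv t' a).
  exists t; split => // c; rewrite in_cons => /orP [/eqP -> | /ht //].
  by exists t'.
exists (a :: t); split.
  move=> c; rewrite in_cons => /orP [/eqP -> | /ht [t' ? ?]].
    by exists a; [exact: mem_head | exact: eqv_refl].
  by exists t' => //; rewrite in_cons orbC; apply/orP; left.
rewrite pairwise_cons pt andbT; apply/allP => b bt; apply/negP => /asboolP e.
by apply: ne; exists b => //; exact: eqv_sym.
Qed.

Lemma transversal_idx (cs : seq G) : (forall x, exists2 c, c \in cs & V (inv c ** x)) ->
  exists q (cidx : G -> 'I_q) (rep : 'I_q -> G),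
    (forall x y, cidx x = cidx y <-> V (inv x ** y)) /\ (forall i, cidx (rep i) = i).
Proof.
move=> hcs.
have [t [ht pt]] := transversal_seq cs.
have ex : forall x, exists i : 'I_(size t), eqv (nth one t i) x.
  move=> x; have [c cc e] := hcs x; have [t' t't e'] := ht c cc.
  have it : index t' t < size t by rewrite index_mem.
  exists (Ordinal it) => /=.
  by rewrite nth_index //; exact: (eqv_trans e').
pose cidx x := proj1_sig (cid (ex x)).
have cspec x : eqv (nth one t (cidx x)) x by rewrite /cidx; case: (cid (ex x)).
have dist (i j : 'I_(size t)) : eqv (nth one t i) (nth one t j) -> i = j.
  move=> e; apply: val_inj => /=; apply: contrapT => ij.
  move/pairwiseP: pt => /(_ one) pt.
  case: (ltngtP i j) => [lt|lt|eq] //.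
    by have := pt i j (ltn_ord i) (ltn_ord j) lt => /negP; apply; apply/asboolP.
  have := pt j i (ltn_ord j) (ltn_ord i) lt => /negP; apply; apply/asboolP.
  exact: eqv_sym.
exists (size t), cidx, (fun i => nth one t i); split.
  move=> x y; split => [e|e].
    have := cspec x; rewrite e => h1; have := cspec y => h2.
    exact: (eqv_trans (eqv_sym h1) h2).
  apply: dist; apply: (eqv_trans (cspec x)); apply: (eqv_trans e).
  exact: eqv_sym (cspec y).
move=> i; apply: dist; exact: cspec.
Qed.

End Transv.


Section Hom.
Variable G : topologicalType.
Variables (mul : G -> G -> G) (inv : G -> G) (one : G).
Hypothesis TG : is_topological_group mul inv one.
Hypothesis cG : compact [set: G].
Local Notation "x ** y" := (mul x y) (at level 40, left associativity).
Variable alpha : G -> G.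
Hypothesis ha : is_hom mul alpha.
Hypothesis ca : continuous alpha.

Lemma hom1 : alpha one = one.
Proof.
apply: (@gcanr _ _ _ _ TG (alpha one)).
by rewrite -ha !(g1m TG).
Qed.

Lemma homV x : alpha (inv x) = inv (alpha x).
Proof. by apply: (ginv_uniq TG); rewrite -ha (gmV TG) hom1. Qed.

Lemma iter_hom k x y : iter k alpha (x ** y) = iter k alpha x ** iter k alpha y.
Proof. by elim: k => //= k ->; rewrite ha. Qed.

Lemma iter_one k : iter k alpha one = one.
Proof. by elim: k => //= k ->; rewrite hom1. Qed.

Lemma iter_inv k x : iter k alpha (inv x) = inv (iter k alpha x).
Proof. by elim: k => //= k ->; rewrite homV. Qed.

Lemma iter_cont k : continuous (iter k alpha).
Proof.
elim: k => [|k IH] x /=; first exact: (@cont_id G x).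
by apply: continuous_comp; [exact: IH | exact: ca].
Qed.

Lemma open_iter_pre (M : set G) n : open M ->
  open [set x | forall k, (k < n)%N -> M (iter k alpha x)].
Proof.
move=> oM; elim: n => [|n IH].
  have -> : [set x | forall k, (k < 0)%N -> M (iter k alpha x)] = setT
    by apply/seteqP; split => x //.
  exact: openT.
have -> : [set x | forall k, (k < n.+1)%N -> M (iter k alpha x)] =
  [set x | forall k, (k < n)%N -> M (iter k alpha x)] `&` (iter n alpha @^-1` M).
  apply/seteqP; split => x /=.
    by move=> h; split; [move=> k kn; apply: h; exact: ltnW|apply: h].
  move=> [h1 h2] k; rewrite ltnS leq_eqVlt => /orP [/eqP -> //|]; exact: h1.
apply: openI => //; apply: open_comp => // x _; exact: iter_cont.
Qed.

Lemma period (M : set G) : is_normal_subgroup mul inv one M -> open M ->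
  topologically_finitely_generated mul inv one ->
  exists N, [/\ is_subgroup mul inv one N, open N, N `<=` M &
    forall x, N x -> N (alpha x)].
Proof.
move=> [sM nM] oM [S [finS clS]].
have [cs hcs] := cover_list TG cG sM oM.
have [q [cidx [rep [ceq crep]]]] := transversal_idx TG sM hcs.
have [X SX] := (proj1 finite_fsetP) finS.
pose ss := finmap.enum_fset X.
pose code (j : nat) : {ffun 'I_(size ss) -> 'I_q} :=
  [ffun t : 'I_(size ss) => cidx (iter j alpha (nth one ss t))].
pose f (j : 'I_(#|{ffun 'I_(size ss) -> 'I_q}|).+1) := code j.
have ninj : ~~ injectiveb f.
  apply/negP => /injectiveP /leq_card; by rewrite card_ord ltnn.
have [i0 [j0 [ij hij]]] : exists i0 j0, (i0 < j0)%N /\ code i0 = code j0.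
  have /injectivePn [i [j ij fij]] := ninj.
  case: (ltngtP i j) => [lt|lt|eq].
  - by exists i, j; split.
  - by exists j, i; split.
  - by exfalso; move: ij => /eqP; apply; apply: val_inj.
have hS : forall s, S s -> M (inv (iter i0 alpha s) ** iter j0 alpha s).
  move=> s; rewrite SX => sX.
  have sX' : s \in ss by exact: sX.
  have it : (index s ss < size ss)%N by rewrite index_mem.
  have := congr1 (fun g : {ffun 'I_(size ss) -> 'I_q} => g (Ordinal it)) hij; rewrite !ffunE /= nth_index //.
  by move/ceq.
pose E := [set x | M (inv (iter i0 alpha x) ** iter j0 alpha x)].
have sE : is_subgroup mul inv one E.
  case: sM => M1 MM MI; split.
  - by rewrite /E /= !iter_one (ginv1 TG) (gm1 TG).
  - move=> x y; rewrite /E /= !iter_hom => Ex Ey.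
    have := MM _ _ (nM (inv (iter i0 alpha y)) _ Ex) Ey.
    by rewrite (ginvK TG) (ginvM TG) !(gA TG) (gmK TG).
  - move=> x; rewrite /E /= !iter_inv (ginvK TG) => Ex.
    have := nM (iter i0 alpha x) _ (MI _ Ex).
    by rewrite (ginvM TG) (ginvK TG) (gA TG) (gmK TG).
have cE : closed E.
  apply: closed_comp; last exact: (subgroup_open_closed TG sM oM).
  move=> x _; apply: (cont_mul2 TG); first apply: (cont_inv TG).
    exact: iter_cont.
  exact: iter_cont.
have allE : forall x, E x.
  move=> x; have : closure (generated_subgroup mul inv one S) x by rewrite clS.
  suff : closure (generated_subgroup mul inv one S) `<=` E by apply.
  rewrite (closure_id E).1 //; apply: closureS => y hy.
  exact: (hy E (conj sE hS)).
pose N := [set x | forall k, (k < j0)%N -> M (iter k alpha x)].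
exists N; split.
- case: sM => M1 MM MI; split.
  + by move=> k _; rewrite iter_one.
  + by move=> x y Nx Ny k kj; rewrite iter_hom; apply: MM; [apply: Nx|apply: Ny].
  + by move=> x Nx k kj; rewrite iter_inv; apply: MI; apply: Nx.
- exact: open_iter_pre oM.
- by move=> x Nx; apply: (Nx 0%N); exact: leq_ltn_trans (leq0n i0) ij.
- move=> x Nx k kj; rewrite -iterSr.
  move: kj; rewrite leq_eqVlt => /orP [/eqP ej|kj]; last exact: Nx.
  rewrite ej; have := allE x; rewrite /E /= => h.
  case: sM => _ MM _; have := MM _ _ (Nx i0 ij) h.
  by rewrite (gVK TG).
Qed.

End Hom.

Unset Implicit Arguments.
Set Strict Implicit.

Theorem proposition3p2 (G : topologicalType) (mul : G -> G -> G) (inv : G -> G)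
    (one : G) (H : set G) (alpha : G -> G) :
  is_profinite_group mul inv one ->
  topologically_finitely_generated mul inv one ->
  is_subgroup mul inv one H ->
  finite_index mul H ->
  is_epimorphism_onto mul alpha H ->
  finite_set (hom_kernel one alpha) /\
  (no_nontrivial_finite_normal_subgroup mul inv one -> injective alpha).
Proof.
move=> [TG cG hG tdG] fg sH fiH [ha ca imH].
have finK : finite_set (hom_kernel one alpha).
  apply: contrapT => infK.
  have [Y hY] := (proj1 finite_fsetP) fiH.
  pose rep (C : set G) := xget one (fun g => C = lcoset mul g H).
  pose gs := map rep (finmap.enum_fset Y).
  have cov : forall x, exists t : 'I_(size gs), exists h, H h /\ x = mul (nth one gs t) h.
    move=> x.
    have inY : lcoset mul x H \in finmap.enum_fset Y.
      have : [set lcoset mul g H | g in [set: G]] (lcoset mul x H) by exists x.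
      by rewrite hY.
    have e : lcoset mul x H = lcoset mul (rep (lcoset mul x H)) H.
      rewrite /rep; case: xgetP => [g _ Pg | nP] //.
      by exfalso; apply: (nP x).
    have inG : rep (lcoset mul x H) \in gs by apply: map_f; exact: inY.
    have it : (index (rep (lcoset mul x H)) gs < size gs)%N by rewrite index_mem.
    exists (Ordinal it); rewrite /= nth_index //.
    have : lcoset mul (rep (lcoset mul x H)) H x.
      rewrite -e; exists one; first by case: sH.
      exact: (gm1 TG).
    by case => h Hh ehx; exists h; split => //; exact: esym ehx.
  pose d := size gs.
  have [B BK cardB] := infinite_set_fset d.+1 infK.
  pose bs := finmap.enum_fset B.
  have ub : uniq bs := finmap.fset_uniq B.
  pose k (l : 'I_d.+1) := nth one bs l.
  have kl_lt : forall l : 'I_d.+1, (l < size bs)%N.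
    by move=> l; apply: (leq_trans (ltn_ord l)).
  have kK : forall l, alpha (k l) = one.
    move=> l; apply: BK; exact: (mem_nth one (kl_lt l)).
  have kdist : forall l m : 'I_d.+1, l != m -> mul (inv (k l)) (k m) <> one.
    move=> l m lm e; have := ginv_uniq TG e; rewrite (ginvK TG) => e2.
    have e3 : nat_of_ord l = nat_of_ord m.
      apply/eqP; rewrite -(nth_uniq one (kl_lt l) (kl_lt m) ub); apply/eqP; exact: esym e2.
    by move/eqP: lm; apply; apply: val_inj.
  pose xs := [seq mul (inv (k p.1)) (k p.2) |
    p <- enum [pred p : 'I_d.+1 * 'I_d.+1 | p.1 != p.2]].
  have [M [nMM oM hM]] := sep_list TG cG hG tdG (xs := xs)
    (fun x hx => ltac:(case/mapP: hx => p; rewrite mem_enum => pn ->; exact: kdist pn)).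
  have kM : forall l m : 'I_d.+1, l != m -> ~ M (mul (inv (k l)) (k m)).
    move=> l m lm; apply: hM; apply/mapP; exists (l, m) => //.
    by rewrite mem_enum.
  have [N [sN oN NM aN]] := period TG cG ha ca nMM oM fg.
  have [cs hcs] := cover_list TG cG sN oN.
  have [q [cidx [repN [ceq crep]]]] := transversal_idx TG sN hcs.
  have lm : forall g x y, cidx x = cidx y -> cidx (mul g x) = cidx (mul g y).
    move=> g x y /ceq e; apply/ceq.
    by rewrite (ginvM TG) -(gA TG) (gKV TG).
  have al : forall x y, cidx x = cidx y -> cidx (alpha x) = cidx (alpha y).
    move=> x y /ceq e; apply/ceq.
    by rewrite -(homV TG ha) -ha; apply: aN.
  have q0 := @count_contra q d (fun a => cidx (alpha (repN a)))
    (fun t j => cidx (mul (nth one gs t) (repN j))).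
  have q0' : q = 0%N.
    apply: q0.
    - move=> i; have [t [h [Hh ei]]] := cov (repN i).
      move: Hh; rewrite -imH => -[y _ ey].
      exists t, (cidx y).
      rewrite -{1}(crep i) ei -ey; apply: lm.
      rewrite crep; apply: al; by rewrite crep.
    - move=> a; exists (fun l => cidx (mul (repN a) (k l))); split.
        move=> l m /ceq e; apply/eqP; apply: contrapT => /negP lmn.
        apply: (kM _ _ lmn); apply: NM.
        by move: e; rewrite (ginvM TG) -!(gA TG) (gKV TG).
      move=> l /=; rewrite (al _ _ (crep _)) ha (kK l) (gm1 TG).
      by [].
  have := ltn_ord (cidx one); move: (nat_of_ord (cidx one)) => n.
  by rewrite q0'.
split => // noN x y exy.
have nK : is_normal_subgroup mul inv one (hom_kernel one alpha).
  split; first split.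
  - exact: (hom1 TG ha).
  - by move=> a b; rewrite /hom_kernel /= ha => -> ->; rewrite (gm1 TG).
  - by move=> a; rewrite /hom_kernel /= (homV TG ha) => ->; rewrite (ginv1 TG).
  - move=> g a; rewrite /hom_kernel /= !ha (homV TG ha) => ->.
    by rewrite (gm1 TG) (gmV TG).
have K1 := noN _ nK finK.
have : hom_kernel one alpha (mul (inv x) y).
  by rewrite /hom_kernel /= ha (homV TG ha) exy (gVm TG).
rewrite K1 => /= e.
by rewrite -(gm1 TG x) -e (gVK TG).
Qed.
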